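(* There exist a joint distribution $P$ of $(x,a,y)$ with two protected groups $a\in\{1,2\}$ and binary labels $y\in\{0,1\}$, a score function $\mathcal{R}$ that is Bayes-optimal for each protected group, i.e. $\mathcal{R}(x,a)=P(y=1\mid x,a)$, and a choice of bias measure $\mathcal{B}$ (demographic parity or equal opportunity) such that the post-processing method restricted to deterministic thresholds (described in the context), with loss equal to the misclassification rate, is not slack-consistent: there is an individual $(x,a)$ and slacks $0<\beta_1<\beta_2<\beta_3$ such that $f_{\beta_1}(x,a), f_{\beta_2}(x,a), f_{\beta_3}(x,a)$ are neither non-decreasing nor non-increasing.
   Context: Setting: individuals are pairs $(x,a)$ with features $x$ and group $a\in\{1,2\}$, label $y\in\{0,1\}$, distributed according to $P$. A classifier $f$ assigns each $(x,a)$ a prediction $f(x,a)\in\{0,1\}$ (more generally a probability in $[0,1]$). Demographic-parity bias: $\mathcal{B}(f)=E[f(x,a)\mid a=1]-E[f(x,a)\mid a=2]$. Equal-opportunity bias: $\mathcal{B}(f)=E[f(x,a)\mid a=1,y=1]-E[f(x,a)\mid a=2,y=1]$. Misclassification loss $\mathcal{L}(f)=P(f(x,a)\neq y)$. Post-processing with deterministic thresholds and slack $\beta>0$: a pair of thresholds $(t_1,t_2)$ defines the classifier $f(x,a)=\mathbb{1}[\mathcal{R}(x,a)\ge t_a]$; among all such pairs minimizing $\mathcal{L}$ subject to $|\mathcal{B}|\le\beta$, keep those with smallest $|\mathcal{B}|$, then those with lowest threshold for group 1 (equivalently, largest positive rate in group 1 being excluded—i.e. smallest $t_1$ in the sense of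 the normalized threshold ordering), then return the one with lowest threshold for group 2. The returned classifier is $f_\beta$. Slack-consistency: for every individual $(x,a)$, the map $\beta\mapsto f_\beta(x,a)$ is monotonic in $\beta>0$. *)

(* Defs.v *)
From HB Require Import structures.
From mathcomp Require Import all_boot all_order all_algebra.
From mathcomp Require Import Rstruct.
From Stdlib Require Import Rdefinitions.
Notation R := Rdefinitions.R.

Set Implicit Arguments. Unset Strict Implicit. Unset Printing Implicit Defensive.
Import Order.TTheory GRing.Theory Num.Theory.
Local Open Scope ring_scope.

(* Conventions:
   - features x range over a finite type X;
   - group a : bool, with  true = group 1  and  false = group 2;
   - label y : bool, with  true = (y = 1)  and  false = (y = 0);
   - P x a y = probability mass of (x,a,y). *)

Definition is_dist (X : finType) (P : X -> bool -> bool -> R) : Prop :=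
  (forall x a y, 0 <= P x a y) /\ \sum_(x : X) \sum_(a : bool) \sum_(y : bool) P x a y = 1.

Definition pXA (X : finType) (P : X -> bool -> bool -> R) (x : X) (a : bool) : R :=
  P x a true + P x a false.

Definition pA (X : finType) (P : X -> bool -> bool -> R) (a : bool) : R :=
  \sum_(x : X) pXA P x a.

Definition pAY1 (X : finType) (P : X -> bool -> bool -> R) (a : bool) : R :=
  \sum_(x : X) P x a true.

Definition bayes_optimal (X : finType) (P : X -> bool -> bool -> R)
  (Rs : X -> bool -> R) : Prop :=
  forall x a, 0 < pXA P x a -> Rs x a = P x a true / pXA P x a.

Definition thr_clf (X : finType) (Rs : X -> bool -> R) (t : bool -> R)
  (x : X) (a : bool) : R :=
  if t a <= Rs x a then 1 else 0.

Definition pos_rate (X : finType) (P : X -> bool -> bool -> R) (f : X -> bool -> R)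
  (a : bool) : R :=
  (\sum_(x : X) pXA P x a * f x a) / pA P a.

Definition tp_rate (X : finType) (P : X -> bool -> bool -> R) (f : X -> bool -> R)
  (a : bool) : R :=
  (\sum_(x : X) P x a true * f x a) / pAY1 P a.

Inductive bias_kind := DemographicParity | EqualOpportunity.

Definition bias (X : finType) (P : X -> bool -> bool -> R) (B : bias_kind)
  (f : X -> bool -> R) : R :=
  match B with
  | DemographicParity => pos_rate P f true - pos_rate P f false
  | EqualOpportunity => tp_rate P f true - tp_rate P f false
  end.

Definition misclass (X : finType) (P : X -> bool -> bool -> R) (f : X -> bool -> R) : R :=
  \sum_(x : X) \sum_(a : bool) \sum_(y : bool)
     P x a y * (if f x a == (if y then 1 else 0) then 0 else 1).

Definition feasible (X : finType) (P : X -> bool -> bool -> R) (Rs : X -> bool -> R)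
  (B : bias_kind) (beta : R) (t : bool -> R) : Prop :=
  `|bias P B (thr_clf Rs t)| <= beta.

(* "t is at least as good as t'" in the selection order of the post-processing:
   lower loss; then smaller |bias|; then lower group-1 threshold (= larger
   group-1 positive rate, normalized threshold ordering); then lower group-2
   threshold (= larger group-2 positive rate). *)
Definition sel_le (X : finType) (P : X -> bool -> bool -> R) (Rs : X -> bool -> R)
  (B : bias_kind) (t t' : bool -> R) : Prop :=
  let f := thr_clf Rs t in let f' := thr_clf Rs t' in
  misclass P f < misclass P f' \/
  (misclass P f = misclass P f' /\
   (`|bias P B f| < `|bias P B f'| \/
    (`|bias P B f| = `|bias P B f'| /\
     (pos_rate P f' true < pos_rate P f true \/
      (pos_rate P f true = pos_rate P f' true /\
       pos_rate P f' false <= pos_rate P f false))))).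

Definition selected (X : finType) (P : X -> bool -> bool -> R) (Rs : X -> bool -> R)
  (B : bias_kind) (beta : R) (t : bool -> R) : Prop :=
  feasible P Rs B beta t /\
  forall t', feasible P Rs B beta t' -> sel_le P Rs B t t'.

Definition non_monotone3 (v1 v2 v3 : R) : Prop :=
  ~ (v1 <= v2 /\ v2 <= v3) /\ ~ (v3 <= v2 /\ v2 <= v1).

(* Main.v *)
Require Import Defs.
From mathcomp Require Import all_boot all_order all_algebra.
From mathcomp Require Import Rstruct.
From mathcomp Require Import ring lra.
Import Order.TTheory GRing.Theory Num.Theory.
Local Open Scope ring_scope.

Definition P0 (x a y : bool) : R :=
  (match x, a, y with
   | true, true, false => 1 | true, true, true => 2
   | true, false, false => 9 | true, false, true => 6
   | false, true, false => 3 | false, true, true => 9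
   | false, false, false => 4 | false, false, true => 5 end)%N%:R / 39%:R.

Definition Rs0 (x a : bool) : R :=
  match x, a with
  | true, true => 2%:R / 3%:R | false, true => 3%:R / 4%:R
  | true, false => 2%:R / 5%:R | false, false => 5%:R / 9%:R end.
Arguments Rs0 : simpl never.

Definition t1 (a : bool) : R := 0.
Definition t2 (a : bool) : R := if a then 7%:R/10%:R else 1%:R/2%:R.
Definition t3 (a : bool) : R := if a then 0 else 1%:R/2%:R.
Arguments t1 : simpl never.
Arguments t2 : simpl never.
Arguments t3 : simpl never.

Lemma sum_bool (F : bool -> R) : \sum_(i : bool) F i = F true + F false.
Proof. by rewrite big_bool. Qed.

Lemma pAt : pA P0 true = 15%:R/39%:R.
Proof. rewrite /pA /pXA sum_bool /P0; cbv beta iota; rewrite ?RplusE; lra. Qed.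
Lemma pAf : pA P0 false = 24%:R/39%:R.
Proof. rewrite /pA /pXA sum_bool /P0; cbv beta iota; rewrite ?RplusE; lra. Qed.

Lemma e11 : ((1:R) == 1) = true. Proof. exact: eqxx. Qed.
Lemma e00 : ((0:R) == 0) = true. Proof. exact: eqxx. Qed.
Lemma e10 : ((1:R) == 0) = false. Proof. exact: oner_eq0. Qed.
Lemma e01 : ((0:R) == 1) = false. Proof. by rewrite eq_sym oner_eq0. Qed.

Ltac tfalse := apply/negbTE; rewrite -ltNge /t1 /t2 /t3 /Rs0; cbv beta iota; lra.
Ltac ttrue := rewrite /t1 /t2 /t3 /Rs0; cbv beta iota; lra.

Ltac finish :=
  rewrite /P0 /Rs0 /t1 /t2 /t3; cbv beta iota; rewrite ?RplusE ?RminusE ?RdivE ?e11 ?e00 ?e10 ?e01;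
  rewrite ler_norml; case/andP => Hf1 Hf2;
  first [ left; lra
        | right; split; first reflexivity; right; split; first reflexivity;
          right; split; first reflexivity; exact: lexx
        | exfalso; lra ].

Lemma tf1 : (t1 true <= Rs0 true true) = true. Proof. ttrue. Qed.
Lemma tf2 : (t1 true <= Rs0 false true) = true. Proof. ttrue. Qed.
Lemma tf3 : (t1 false <= Rs0 true false) = true. Proof. ttrue. Qed.
Lemma tf4 : (t1 false <= Rs0 false false) = true. Proof. ttrue. Qed.
Lemma tf5 : (t2 true <= Rs0 true true) = false. Proof. tfalse. Qed.
Lemma tf6 : (t2 true <= Rs0 false true) = true. Proof. ttrue. Qed.
Lemma tf7 : (t2 false <= Rs0 true false) = false. Proof. tfalse. Qed.
Lemma tf8 : (t2 false <= Rs0 false false) = true. Proof. ttrue. Qed.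
Lemma tf9 : (t3 true <= Rs0 true true) = true. Proof. ttrue. Qed.
Lemma tf10 : (t3 true <= Rs0 false true) = true. Proof. ttrue. Qed.
Lemma tf11 : (t3 false <= Rs0 true false) = false. Proof. tfalse. Qed.
Lemma tf12 : (t3 false <= Rs0 false false) = true. Proof. ttrue. Qed.

Ltac crunch :=
  let t' := fresh "tp" in intro t';
  rewrite /feasible /sel_le /bias /pos_rate /misclass ?pAt ?pAf /pXA /thr_clf !sum_bool ?tf1 ?tf2 ?tf3 ?tf4 ?tf5 ?tf6 ?tf7 ?tf8 ?tf9 ?tf10 ?tf11 ?tf12;
  case: (lerP (t' true) (Rs0 true true)) => h1;
  case: (lerP (t' true) (Rs0 false true)) => h2;
  case: (lerP (t' false) (Rs0 true false)) => h3;
  case: (lerP (t' false) (Rs0 false false)) => h4;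
  unfold Rs0 in *; (try (exfalso; lra)); finish.

Lemma sel2 : selected P0 Rs0 DemographicParity (1%:R/2%:R) t2.
Proof.
split.
  rewrite /feasible /bias /pos_rate /misclass ?pAt ?pAf /pXA /thr_clf !sum_bool.
  have -> : (t2 true <= Rs0 true true) = false by tfalse.
  have -> : (t2 true <= Rs0 false true) = true by ttrue.
  have -> : (t2 false <= Rs0 true false) = false by tfalse.
  have -> : (t2 false <= Rs0 false false) = true by ttrue.
  rewrite /P0; cbv beta iota. rewrite ?RplusE ?RminusE ?RdivE. rewrite ler_norml; apply/andP; split; lra.
crunch.
Qed.

Lemma sel1 : selected P0 Rs0 DemographicParity (1%:R/10%:R) t1.
Proof.
split.
  rewrite /feasible /bias /pos_rate /misclass ?pAt ?pAf /pXA /thr_clf !sum_bool tf1 tf2 tf3 tf4.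
  rewrite /P0; cbv beta iota.
  rewrite ?RplusE ?RminusE ?RdivE. rewrite ler_norml; apply/andP; split; lra.
crunch.
Qed.

Lemma sel3 : selected P0 Rs0 DemographicParity (7%:R/10%:R) t3.
Proof.
split.
  rewrite /feasible /bias /pos_rate /misclass ?pAt ?pAf /pXA /thr_clf !sum_bool tf9 tf10 tf11 tf12.
  rewrite /P0; cbv beta iota.
  rewrite ?RplusE ?RminusE ?RdivE. rewrite ler_norml; apply/andP; split; lra.
crunch.
Qed.

Lemma bo : bayes_optimal P0 Rs0.
Proof.
move=> x a _; case: x; case: a; rewrite /Rs0 /pXA /P0; cbv beta iota; rewrite ?RplusE; by field.
Qed.

Theorem theorem2 :
  exists (X : finType) (P : X -> bool -> bool -> R) (Rs : X -> bool -> R)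
         (B : bias_kind),
    is_dist P /\
    (forall a, 0 < pA P a) /\ (forall a, 0 < pAY1 P a) /\
    bayes_optimal P Rs /\
    exists (x : X) (a : bool) (beta1 beta2 beta3 : R) (t1 t2 t3 : bool -> R),
      0 < pXA P x a /\
      0 < beta1 /\ beta1 < beta2 /\ beta2 < beta3 /\
      selected P Rs B beta1 t1 /\
      selected P Rs B beta2 t2 /\
      selected P Rs B beta3 t3 /\
      non_monotone3 (thr_clf Rs t1 x a) (thr_clf Rs t2 x a) (thr_clf Rs t3 x a).
Proof.
exists bool, P0, Rs0, DemographicParity.
split.
  split.
    move=> x a y; case: x; case: a; case: y; rewrite /P0; cbv beta iota; lra.
  rewrite !sum_bool /P0; cbv beta iota; lra.
split.
  by case; rewrite ?pAt ?pAf; lra.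
split.
  by case; rewrite /pAY1 sum_bool /P0; cbv beta iota; lra.
split; first exact: bo.
exists true, true, (1%:R/10%:R), (1%:R/2%:R), (7%:R/10%:R), t1, t2, t3.
split.
  rewrite /pXA /P0; cbv beta iota; rewrite ?RplusE; lra.
split; first lra.
split; first lra.
split; first lra.
split; first exact: sel1.
split; first exact: sel2.
split; first exact: sel3.
rewrite /thr_clf tf1 tf5 ?tf9 /non_monotone3; lra.
Qed.
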